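(* Let $A\in\mathbb{R}^{M\times N}$, $M\ge N$, have SVD $A=U\Sigma V^T$ with $U=[u_1,\dots,u_M]$, $V=[v_1,\dots,v_N]$ orthogonal and $\Sigma=\mathrm{diag}\{\sigma_1,\dots,\sigma_N\}\in\mathbb{R}^{M\times N}$, let $\tau\ge0$ and $1\le m<N$. Let $U_m=[u_1,\dots,u_m]$, $V_m=[v_1,\dots,v_m]$, $P_m=[u_{m+1},\dots,u_M]$, $Q_m=[v_{m+1},\dots,v_N]$, $\Sigma_m'=P_m^TAQ_m=\mathrm{diag}\{\sigma_{m+1},\dots,\sigma_N\}\in\mathbb{R}^{(M-m)\times(N-m)}$, and $$B_m'=\begin{bmatrix}-\tau I_{M-m}&\Sigma_m'\\(\Sigma_m')^T&-\tau I_{N-m}\end{bmatrix}.$$ Let $\widetilde U_m\in\mathbb{R}^{M\times m}$, $\widetilde V_m\in\mathbb{R}^{N\times m}$ have orthonormal columns (the approximate left and right singular vectors $\tilde u_i=\widetilde Uc_i$, $\tilde v_i=\widetilde Vd_i$, $i=1,\dots,m$, obtained from the singular triplets $(\theta_i,c_i,d_i)$ of $H=\widetilde U^TA\widetilde V$ for orthonormal $\widetilde U\in\mathbb{R}^{M\times k}$, $\widetilde V\in\mathbb{R}^{N\times k}$, $k>m$), let $\widetilde P_m,\widetilde Q_m$ be such that $[\widetilde U_m,\widetilde P_m]$ and $[\widetilde V_m,\widetilde Q_m]$ are orthogonal, and $$\widetilde B_m'=\begin{bmatrix}-\tau I_{M-m}&\widetilde P_m^TA\widetilde Q_m\\ \widetilde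 Q_m^TA^T\widetilde P_m&-\tau I_{N-m}\end{bmatrix}.$$ Let $\Phi$ and $\Psi$ be the canonical angle matrices between $\mathcal{R}(\widetilde U_m)$ and $\mathcal{R}(U_m)$, and between $\mathcal{R}(\widetilde V_m)$ and $\mathcal{R}(V_m)$. Then there exists an orthogonal $Z\in\mathbb{R}^{(M+N-2m)\times(M+N-2m)}$ such that $$\|\widetilde B_m'-Z^TB_m'Z\|\le\|A\|\big(\|\sin\Phi\|+\|\sin\Psi\|\big)^2 .$$
   Context: $\mathcal{R}(\cdot)$ denotes column space and $\|\cdot\|$ the spectral norm. For subspaces spanned by orthonormal $X,Y\in\mathbb{R}^{n\times m}$, the canonical angle matrix $\Theta$ is diagonal with the canonical (principal) angles $\theta_i=\arccos$ of the singular values of $X^TY$; in particular $\|\sin\Phi\|=\|\widetilde P_m^TU_m\|$ and $\|\sin\Psi\|=\|\widetilde Q_m^TV_m\|$. *)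

(* Defs.v *)
From HB Require Import structures.
From mathcomp Require Import all_boot all_order all_algebra.
From mathcomp Require Import classical_sets reals.
Set Implicit Arguments. Unset Strict Implicit. Unset Printing Implicit Defensive.
Import Order.TTheory GRing.Theory Num.Theory.
Local Open Scope ring_scope.
Local Open Scope classical_set_scope.

Section Defs.
Variable R : realType.

Definition vnorm2 n (x : 'cV[R]_n) : R := Num.sqrt (\sum_i x i 0 ^+ 2).

Definition spnorm r c (A : 'M[R]_(r, c)) : R :=
  sup [set vnorm2 (A *m x) | x in [set x : 'cV[R]_c | vnorm2 x <= 1]].

Definition smin n (C : 'M[R]_n) : R :=
  inf [set vnorm2 (C *m x) | x in [set x : 'cV[R]_n | vnorm2 x = 1]].

Definition orth_sq_mx n (Q : 'M[R]_n) : Prop := Q^T *m Q = 1%:M.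

Definition orthonormal_cols r c (X : 'M[R]_(r, c)) : Prop := X^T *m X = 1%:M.

(* ||sin Theta|| for the canonical angle matrix Theta between R(X) and R(Y),
   X, Y orthonormal n x k: the canonical angles are theta_i = arccos sigma_i(X^T Y),
   so ||sin Theta|| = max_i sin theta_i = sqrt (1 - sigma_min(X^T Y)^2). *)
Definition sin_canon_norm n k (X Y : 'M[R]_(n, k)) : R :=
  Num.sqrt (1 - smin (X^T *m Y) ^+ 2).

Definition rect_diag r c (s : 'I_c -> R) : 'M[R]_(r, c) :=
  \matrix_(i, j) (if (i : nat) == (j : nat) then s j else 0).

End Defs.

(* Main.v *)
Require Import Defs.
From HB Require Import structures.
From mathcomp Require Import all_boot all_order all_algebra.
From mathcomp Require Import classical_sets reals.
From mathcomp Require Import complex ring lra zify.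
Set Implicit Arguments. Unset Strict Implicit. Unset Printing Implicit Defensive.
Import Order.TTheory GRing.Theory Num.Theory.
Local Open Scope ring_scope.


Lemma sym_eig (R : realType) n (S : 'M[R]_n.+1) : S^T = S ->
  exists (r : R) (v : 'cV[R]_n.+1), v != 0 /\ S *m v = r *: v.
Proof.
move=> Ssym.
pose f := real_complex R.
pose Sc := map_mx f S.
have Sch : Sc \is hermsymmx.
  apply: realsym_hermsym.
    by rewrite qualifE /= expr0 scale1r map_mx_id // /Sc map_trmx Ssym.
  by apply/mxOverP => i j; rewrite mxE; apply/complex_realP; exists (S i j).
have Dreal := hermitian_spectral_diag_real Sch.
have /orthomx_spectralP Seq := hermitian_normalmx Sch.
set P := spectralmx Sc in Seq; set D := spectral_diag Sc in Seq Dreal.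
have Pu : P \in unitmx by apply: spectral_unit.
have eigc : eigenvalue Sc (D 0 0).
  apply/eigenvalueP; exists (row 0 P).
    rewrite -row_mul.
    have -> : P *m Sc = diag_mx D *m P.
      by rewrite Seq !mulmxA mulmxV // mul1mx.
    by rewrite row_mul row_diag_mx -scalemxAl -rowE.
  apply/negP => /eqP r0.
  have : \det P != 0 by rewrite -unitfE -unitmxE.
  by rewrite (expand_det_row _ 0) big1 ?eqxx // => j _; move/rowP: r0 => /(_ j); rewrite !mxE => ->; rewrite mul0r.
have [r Dr] : exists r, D 0 0 = f r.
  by apply/complex_realP; move/mxOverP: Dreal; apply.
have : root (char_poly S) r.
  move: eigc; rewrite Dr eigenvalue_root_char -map_char_poly.
  by rewrite (fmorph_root f).
rewrite -eigenvalue_root_char => /eigenvalueP [w wS w0].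
exists r, w^T; split; first by rewrite trmx_eq0.
by rewrite -Ssym -trmx_mul wS linearZ.
Qed.


Section Norms.
Variable R : realType.

Definition dot n (x y : 'cV[R]_n) : R := (x^T *m y) 0 0.
Definition sqn n (x : 'cV[R]_n) : R := dot x x.

Lemma dotE n (x y : 'cV[R]_n) : dot x y = \sum_i x i 0 * y i 0.
Proof. by rewrite /dot mxE; apply: eq_bigr => i _; rewrite mxE. Qed.

Lemma sqnE n (x : 'cV[R]_n) : sqn x = \sum_i x i 0 ^+ 2.
Proof. by rewrite /sqn dotE; apply: eq_bigr => i _; rewrite expr2. Qed.

Lemma vnorm2E n (x : 'cV[R]_n) : vnorm2 x = Num.sqrt (sqn x).
Proof. by rewrite sqnE. Qed.

Lemma sqn_ge0 n (x : 'cV[R]_n) : 0 <= sqn x.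
Proof. by rewrite sqnE; apply: sumr_ge0 => i _; apply: sqr_ge0. Qed.

Lemma sqn_eq0 n (x : 'cV[R]_n) : sqn x = 0 -> x = 0.
Proof.
rewrite sqnE => /eqP; rewrite psumr_eq0 => [/allP H|i _]; last exact: sqr_ge0.
apply/matrixP => i j; rewrite ord1 mxE.
by have := H i (mem_index_enum _); rewrite sqrf_eq0 => /eqP.
Qed.

Lemma vnorm2_ge0 n (x : 'cV[R]_n) : 0 <= vnorm2 x.
Proof. by rewrite vnorm2E sqrtr_ge0. Qed.

Lemma vnorm2_sq n (x : 'cV[R]_n) : vnorm2 x ^+ 2 = sqn x.
Proof. by rewrite vnorm2E sqr_sqrtr // sqn_ge0. Qed.

Lemma dotC n (x y : 'cV[R]_n) : dot x y = dot y x.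
Proof. by rewrite !dotE; apply: eq_bigr => i _; rewrite mulrC. Qed.

Lemma dotDr n (x y z : 'cV[R]_n) : dot x (y + z) = dot x y + dot x z.
Proof. by rewrite /dot mulmxDr mxE. Qed.

Lemma dotZr n a (x y : 'cV[R]_n) : dot x (a *: y) = a * dot x y.
Proof. by rewrite /dot -scalemxAr mxE. Qed.

Lemma dotNr n (x y : 'cV[R]_n) : dot x (- y) = - dot x y.
Proof. by rewrite -scaleN1r dotZr mulN1r. Qed.

Lemma dotDl n (x y z : 'cV[R]_n) : dot (y + z) x = dot y x + dot z x.
Proof. by rewrite dotC dotDr !(dotC x). Qed.

Lemma dotZl n a (x y : 'cV[R]_n) : dot (a *: y) x = a * dot y x.
Proof. by rewrite dotC dotZr dotC. Qed.

Lemma dotNl n (x y : 'cV[R]_n) : dot (- y) x = - dot y x.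
Proof. by rewrite dotC dotNr dotC. Qed.

Lemma dot_adj r c (A : 'M[R]_(r, c)) x y : dot x (A *m y) = dot (A^T *m x) y.
Proof. by rewrite /dot trmx_mul trmxK mulmxA. Qed.

Lemma sqnZ n a (x : 'cV[R]_n) : sqn (a *: x) = a ^+ 2 * sqn x.
Proof. by rewrite /sqn dotZl dotZr mulrA expr2. Qed.

Lemma CS2 n (x y : 'cV[R]_n) : dot x y ^+ 2 <= sqn x * sqn y.
Proof.
have [y0|yn0] := eqVneq (sqn y) 0.
  move/sqn_eq0: y0 => ->; rewrite /dot mulmx0 mxE expr0n /=.
  by apply: mulr_ge0; apply: sqn_ge0.
have yp : 0 < sqn y by rewrite lt_def yn0 sqn_ge0.
pose t := dot x y / sqn y.
have E : sqn (x - t *: y) = sqn x - 2 * t * dot x y + t ^+ 2 * sqn y.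
  rewrite /sqn dotDl !dotDr !dotNr !dotNl !dotZl !dotZr (dotC y x); ring.
have := sqn_ge0 (x - t *: y); rewrite E /t => H.
have : 0 <= sqn x - dot x y ^+ 2 / sqn y.
  suff <- : sqn x - 2 * (dot x y / sqn y) * dot x y + (dot x y / sqn y) ^+ 2 * sqn y
    = sqn x - dot x y ^+ 2 / sqn y by [].
  by field.
by rewrite subr_ge0 ler_pdivrMr // mulrC.
Qed.

Lemma dot_le n (x y : 'cV[R]_n) : dot x y <= vnorm2 x * vnorm2 y.
Proof.
rewrite !vnorm2E -sqrtrM ?sqn_ge0 //.
apply: (le_trans (ler_norm _)).
by rewrite -sqrtr_sqr; apply: ler_wsqrtr; apply: CS2.
Qed.

Lemma vnorm2_le n k (x : 'cV[R]_n) (y : 'cV[R]_k) : sqn x <= sqn y -> vnorm2 x <= vnorm2 y.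
Proof. by move=> H; rewrite !vnorm2E; apply: ler_wsqrtr. Qed.

Lemma vnorm2_leZ n k c (x : 'cV[R]_n) (y : 'cV[R]_k) : 0 <= c ->
  sqn x <= c ^+ 2 * sqn y -> vnorm2 x <= c * vnorm2 y.
Proof.
move=> c0 H; rewrite !vnorm2E -(ger0_norm c0) -sqrtr_sqr -sqrtrM ?sqr_ge0 //.
exact: ler_wsqrtr.
Qed.

Lemma vnorm2Z n a (x : 'cV[R]_n) : vnorm2 (a *: x) = `|a| * vnorm2 x.
Proof. by rewrite !vnorm2E sqnZ sqrtrM ?sqr_ge0 // sqrtr_sqr. Qed.

Lemma vnorm2_0 n : vnorm2 (0 : 'cV[R]_n) = 0.
Proof. by rewrite vnorm2E /sqn /dot mulmx0 mxE sqrtr0. Qed.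

Lemma vnorm2_gt0 n (x : 'cV[R]_n) : x != 0 -> 0 < vnorm2 x.
Proof.
move=> xn0; rewrite vnorm2E sqrtr_gt0 lt_def sqn_ge0 andbT.
by apply/eqP => /sqn_eq0 x0; rewrite x0 eqxx in xn0.
Qed.

Lemma vnorm2_tri n (x y : 'cV[R]_n) : vnorm2 (x + y) <= vnorm2 x + vnorm2 y.
Proof.
have h : sqn (x + y) <= (vnorm2 x + vnorm2 y) ^+ 2.
  rewrite /sqn dotDl !dotDr (dotC y x) -/(sqn x) -/(sqn y) -!vnorm2_sq.
  have := dot_le x y; nra.
rewrite -[X in _ <= X]ger0_norm ?addr_ge0 ?vnorm2_ge0 // -sqrtr_sqr vnorm2E.
exact: ler_wsqrtr.
Qed.

Definition bnd r c (A : 'M[R]_(r, c)) (k : R) :=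
  forall x, vnorm2 (A *m x) <= k * vnorm2 x.

Lemma bnd_add r c (A B : 'M[R]_(r, c)) a b : bnd A a -> bnd B b -> bnd (A + B) (a + b).
Proof.
move=> hA hB x; rewrite mulmxDl mulrDl.
by apply: (le_trans (vnorm2_tri _ _)); apply: lerD.
Qed.

Lemma bnd_mul r k c (A : 'M[R]_(r, k)) (B : 'M[R]_(k, c)) a b : 0 <= a ->
  bnd A a -> bnd B b -> bnd (A *m B) (a * b).
Proof.
move=> a0 hA hB x; rewrite -mulmxA -mulrA.
by apply: (le_trans (hA _)); apply: ler_wpM2l.
Qed.

Lemma bnd_ge r c (A : 'M[R]_(r, c)) a b : bnd A a -> a <= b -> bnd A b.
Proof.
by move=> hA ab x; apply: (le_trans (hA x)); apply: ler_wpM2r => //; apply: vnorm2_ge0.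
Qed.

Lemma bnd_opp r c (A : 'M[R]_(r, c)) a : bnd A a -> bnd (- A) a.
Proof.
by move=> hA x; rewrite mulNmx -scaleN1r vnorm2Z normrN normr1 mul1r.
Qed.

Lemma bnd_tr r c (A : 'M[R]_(r, c)) a : 0 <= a -> bnd A a -> bnd A^T a.
Proof.
move=> a0 hA x.
have h1 : sqn (A^T *m x) <= vnorm2 x * (a * vnorm2 (A^T *m x)).
  rewrite /sqn -dot_adj.
  apply: (le_trans (dot_le _ _)); apply: ler_wpM2l; first exact: vnorm2_ge0.
  exact: hA.
have [z0|zn0] := eqVneq (A^T *m x) 0.
  by rewrite z0 vnorm2_0; apply: mulr_ge0 => //; apply: vnorm2_ge0.
have zp := vnorm2_gt0 zn0.
rewrite -vnorm2_sq expr2 in h1.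
rewrite -(ler_pM2r zp); apply: (le_trans h1); rewrite mulrCA mulrA.
by [].
Qed.

Lemma bnd_orth r c (M : 'M[R]_(r, c)) : M^T *m M = 1%:M -> bnd M 1.
Proof.
move=> h x; rewrite mul1r; apply: vnorm2_le.
by rewrite /sqn dot_adj mulmxA h mul1mx.
Qed.

Lemma sqn_orth r c (M : 'M[R]_(r, c)) x : M^T *m M = 1%:M -> sqn (M *m x) = sqn x.
Proof. by move=> h; rewrite /sqn dot_adj mulmxA h mul1mx. Qed.

Lemma bnd_ge0 r c (A : 'M[R]_(r, c)) a : (0 < c)%N -> bnd A a -> 0 <= a.
Proof.
move=> c0 hA; pose e : 'cV[R]_c := delta_mx (Ordinal c0) 0.
have en0 : e != 0.
  apply/negP => /eqP/matrixP/(_ (Ordinal c0) 0); rewrite !mxE !eqxx /=.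
  by move/eqP; rewrite oner_eq0.
have := hA e; have := vnorm2_gt0 en0 => ep H.
by rewrite -(pmulr_lge0 _ ep); apply: le_trans H; apply: vnorm2_ge0.
Qed.

Lemma row_dot r c (A : 'M[R]_(r, c)) x i : (A *m x) i 0 = dot (row i A)^T x.
Proof. by rewrite /dot trmxK -row_mul [RHS]mxE. Qed.

Lemma spnorm_has_ub r c (A : 'M[R]_(r, c)) :
  has_ubound [set vnorm2 (A *m x) | x in [set x : 'cV[R]_c | vnorm2 x <= 1]].
Proof.
exists (Num.sqrt (\sum_i sqn (row i A)^T)) => _ [x /= x1 <-].
rewrite vnorm2E; apply: ler_wsqrtr.
have sx : sqn x <= 1.
  by rewrite -vnorm2_sq -(expr1n _ 2); rewrite ler_sqr ?nnegrE ?vnorm2_ge0.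
rewrite sqnE; apply: ler_sum => i _; rewrite row_dot.
apply: (le_trans (CS2 _ _)).
by rewrite -[X in _ <= X]mulr1; apply: ler_wpM2l => //; apply: sqn_ge0.
Qed.

Lemma spnorm_ub r c (A : 'M[R]_(r, c)) : bnd A (spnorm A).
Proof.
move=> x; have [x0|xn0] := eqVneq x 0.
  by rewrite x0 mulmx0 !vnorm2_0 mulr0.
have xp := vnorm2_gt0 xn0.
pose y := (vnorm2 x)^-1 *: x.
have y1 : vnorm2 y = 1 by rewrite vnorm2Z ger0_norm ?invr_ge0 ?ltW // mulVf // gt_eqF.
have : vnorm2 (A *m y) <= spnorm A.
  by apply: (ub_le_sup (spnorm_has_ub A)); exists y => //=; rewrite y1.
rewrite /y -scalemxAr vnorm2Z ger0_norm; last by rewrite invr_ge0 vnorm2_ge0.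
move=> h; rewrite mulrC -ler_pdivrMl //; exact: h.
Qed.

Lemma spnorm_le r c (A : 'M[R]_(r, c)) k : 0 <= k -> bnd A k -> spnorm A <= k.
Proof.
move=> k0 hA; apply: ge_sup.
  by exists 0, 0; rewrite /= ?mulmx0 vnorm2_0.
move=> _ [x /= x1 <-]; apply: (le_trans (hA x)).
by rewrite -[X in _ <= X]mulr1; apply: ler_wpM2l.
Qed.

Lemma spnorm_ge0 r c (A : 'M[R]_(r, c)) : 0 <= spnorm A.
Proof.
apply: (le_trans _ (ub_le_sup (spnorm_has_ub A) _)); last first.
  by exists 0; rewrite //= vnorm2_0.
by rewrite mulmx0 vnorm2_0.
Qed.

Lemma smin_lbound n (C : 'M[R]_n) :
  has_lbound [set vnorm2 (C *m x) | x in [set x : 'cV[R]_n | vnorm2 x = 1]].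
Proof. by exists 0 => _ [x _ <-]; apply: vnorm2_ge0. Qed.

Lemma smin_lb n (C : 'M[R]_n) x : smin C * vnorm2 x <= vnorm2 (C *m x).
Proof.
have [x0|xn0] := eqVneq x 0.
  by rewrite x0 mulmx0 !vnorm2_0 mulr0.
have xp := vnorm2_gt0 xn0.
pose y := (vnorm2 x)^-1 *: x.
have y1 : vnorm2 y = 1 by rewrite vnorm2Z ger0_norm ?invr_ge0 ?ltW // mulVf // gt_eqF.
have : smin C <= vnorm2 (C *m y).
  by apply: (ge_inf (smin_lbound C)); exists y.
rewrite /y -scalemxAr vnorm2Z ger0_norm; last by rewrite invr_ge0 vnorm2_ge0.
by rewrite ler_pdivlMl // mulrC.
Qed.

Lemma unit_vec n : (0 < n)%N -> exists e : 'cV[R]_n, vnorm2 e = 1.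
Proof.
move=> n0; exists (delta_mx (Ordinal n0) 0).
rewrite vnorm2E sqnE (bigD1 (Ordinal n0)) //= big1 ?addr0.
  by rewrite mxE !eqxx expr1n sqrtr1.
by move=> i /negbTE ni; rewrite mxE ni expr0n.
Qed.

Lemma smin_ge0 n (C : 'M[R]_n) : (0 < n)%N -> 0 <= smin C.
Proof.
move=> n0; have [e e1] := unit_vec n0.
apply: lb_le_inf; first by exists (vnorm2 (C *m e)), e.
by move=> _ [x _ <-]; apply: vnorm2_ge0.
Qed.

Lemma smin_le n (C : 'M[R]_n) k : (0 < n)%N -> bnd C k -> smin C <= k.
Proof.
move=> n0 hC; have [e e1] := unit_vec n0.
have := smin_lb C e; rewrite e1 mulr1 => h; apply: (le_trans h).
by have := hC e; rewrite e1 mulr1.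
Qed.

End Norms.


Section SVD.
Variable R : realType.

Lemma trmx_cV_mul n (w x : 'cV[R]_n) : w^T *m x = (dot w x)%:M.
Proof. by apply/matrixP => i j; rewrite !ord1 [RHS]mxE. Qed.

Lemma householder n (u : 'cV[R]_n.+1) : sqn u = 1 ->
  exists H : 'M[R]_n.+1, H^T *m H = 1%:M /\ H *m delta_mx 0 0 = u.
Proof.
move=> u1; set e : 'cV[R]_n.+1 := delta_mx 0 0.
have [ue|une] := eqVneq u e; first by exists 1%:M; split; rewrite ?trmx1 mul1mx // ue.
set w := u - e.
have wn0 : w != 0 by rewrite subr_eq0.
have sp : 0 < sqn w by rewrite lt_def sqn_ge0 andbT; apply/eqP => /sqn_eq0/eqP; apply/negP.
set s := sqn w.
have e1 : sqn e = 1.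
  rewrite sqnE (bigD1 0) //= big1 ?addr0; first by rewrite mxE !eqxx expr1n.
  by move=> i /negbTE ni; rewrite mxE ni expr0n.
have we : dot w e = - s / 2.
  have : s = sqn u - 2 * dot u e + sqn e.
    rewrite /s /sqn /w dotDl !dotDr !dotNl !dotNr (dotC e u); ring.
  rewrite u1 e1 => ->; rewrite /w dotDl dotNl -/(sqn e) e1.
  by field.
pose k : R := 2 / s.
pose P := w *m w^T.
have PT : P^T = P by rewrite /P trmx_mul trmxK.
have PP : P *m P = s *: P.
  by rewrite /P mulmxA -(mulmxA w) trmx_cV_mul mul_mx_scalar -scalemxAl.
exists ((1%:M : 'M[R]_n.+1) - k *: P); split.
  have HT : (1%:M - k *: P)^T = 1%:M - k *: P.
    apply/matrixP => i j; move/matrixP: (PT) => /(_ j i); rewrite !mxE => PTji.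
    by rewrite eq_sym PTji.
  rewrite HT.
  rewrite mulmxBl !mulmxBr !mul1mx !mulmx1 -!scalemxAl -!scalemxAr PP !scalerA.
  rewrite -scalerBl -addrA -opprD -scalerDl.
  rewrite (_ : k + (k - k * k * s) = 0) ?scale0r ?oppr0 ?addr0 //.
  by rewrite /k; field; rewrite gt_eqF.
rewrite mulmxBl mul1mx -scalemxAl /P -mulmxA trmx_cV_mul we mul_mx_scalar scalerA.
rewrite /k (_ : 2 / s * (- s / 2) = -1); last by field; rewrite gt_eqF.
by rewrite scaleN1r opprK /w addrC subrK.
Qed.


Lemma orth_mul n (A B : 'M[R]_n) : A^T *m A = 1%:M -> B^T *m B = 1%:M ->
  (A *m B)^T *m (A *m B) = 1%:M.
Proof.
by move=> hA hB; rewrite trmx_mul mulmxA -(mulmxA B^T) hA mulmx1 hB.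
Qed.

Lemma orth_blk n (P : 'M[R]_n) : P^T *m P = 1%:M ->
  (block_mx (1%:M : 'M[R]_1) 0 0 P)^T *m (block_mx (1%:M : 'M[R]_1) 0 0 P) = 1%:M.
Proof.
move=> hP; rewrite tr_block_mx mulmx_block !trmx0 trmx1 hP.
by rewrite !mulmx0 !mul0mx !mulmx1 !addr0 !add0r -scalar_mx_block.
Qed.

Lemma svd n (X : 'M[R]_n) : exists (P Q : 'M[R]_n) (d : 'rV[R]_n),
  P^T *m P = 1%:M /\ Q^T *m Q = 1%:M /\ (forall i, 0 <= d 0 i) /\
  X = P *m diag_mx d *m Q^T.
Proof.
elim: n X => [|n IH] X.
  exists 1%:M, 1%:M, 0; rewrite trmx1 mul1mx; split=> //; split=> //; split.
    by move=> i; case: i.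
  by rewrite [X]thinmx0 [RHS]thinmx0.
have XXs : (X^T *m X)^T = X^T *m X by rewrite trmx_mul trmxK.
have [r [v0 [v0n Sv0]]] := sym_eig XXs.
have v0p := vnorm2_gt0 v0n.
pose v := (vnorm2 v0)^-1 *: v0.
have v1 : sqn v = 1.
  by rewrite sqnZ -vnorm2_sq exprVn mulVf // expf_neq0 // gt_eqF.
have Sv : X^T *m X *m v = r *: v.
  by rewrite /v -scalemxAr Sv0 !scalerA mulrC.
have [u [sig [u1 [sig0 [Xv XTu]]]]] : exists u sig, sqn u = 1 /\ 0 <= sig /\
    X *m v = sig *: u /\ X^T *m u = sig *: v.
  have [Xv0|Xvn0] := eqVneq (X *m v) 0.
    have Xnu : X \notin unitmx.
      apply/negP => Xu; have : v = 0 by rewrite -(mulKmx Xu v) Xv0 mulmx0.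
      by move=> v0'; move: v1; rewrite v0' /sqn /dot mulmx0 mxE => /eqP; rewrite eq_sym oner_eq0.
    have : kermx X != 0 by rewrite kermx_eq0 row_free_unit.
    case/rowV0Pn => w /sub_kermxP wX wn0.
    have wTn0 : w^T != 0 by rewrite trmx_eq0.
    have wp := vnorm2_gt0 wTn0.
    exists ((vnorm2 w^T)^-1 *: w^T), 0; split.
      by rewrite sqnZ -vnorm2_sq exprVn mulVf // expf_neq0 // gt_eqF.
    split=> //; rewrite Xv0 !scale0r; split=> //.
    by rewrite -scalemxAr -trmx_mul wX trmx0 scaler0.
  have sp := vnorm2_gt0 Xvn0.
  exists ((vnorm2 (X *m v))^-1 *: (X *m v)), (vnorm2 (X *m v)); split.
    by rewrite sqnZ -vnorm2_sq exprVn mulVf // expf_neq0 // gt_eqF.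
  split; first exact: ltW.
  split; first by rewrite scalerA mulfV ?gt_eqF // scale1r.
  have rE : r = vnorm2 (X *m v) ^+ 2.
    rewrite vnorm2_sq -[r]mulr1 -v1 /sqn -dotZr -Sv -mulmxA dot_adj.
    by rewrite trmxK.
  by rewrite -scalemxAr mulmxA Sv scalerA rE expr2 mulKf // gt_eqF.
have [Hu [Hu1 Hue]] := householder u1.
have [Hv [Hv1 Hve]] := householder v1.
pose M := Hu^T *m X *m Hv.
have Me : M *m (delta_mx 0 0 : 'cV_n.+1) = sig *: delta_mx 0 0.
  by rewrite /M -mulmxA Hve -mulmxA Xv -scalemxAr -Hue mulmxA Hu1 mul1mx.
have MTe : M^T *m (delta_mx 0 0 : 'cV_n.+1) = sig *: delta_mx 0 0.
  rewrite /M !trmx_mul trmxK -!mulmxA Hue mulmxA -mulmxA XTu -scalemxAr -Hve.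
  by rewrite mulmxA Hv1 mul1mx.
pose M1 : 'M_(1 + n) := M.
have Mi0 : forall i j : 'I_(1 + n), (j : nat) = 0%N -> M1 i j = sig * ((i : nat) == 0%N)%:R.
  move=> i j j0; have -> : j = 0 by apply: val_inj.
  move/matrixP: Me => /(_ i 0); rewrite -colE !mxE eqxx andbT => <-.
  by [].
have M0j : forall i j : 'I_(1 + n), (i : nat) = 0%N -> M1 i j = sig * ((j : nat) == 0%N)%:R.
  move=> i j i0; have -> : i = 0 by apply: val_inj.
  move/matrixP: MTe => /(_ j 0); rewrite -colE !mxE eqxx andbT => <-.
  by [].
have M1E : M1 = M by [].
clearbody M1.
have Mblk : M1 = block_mx (sig%:M : 'M_1) 0 0 (drsubmx M1).
  rewrite -{1}[M1]submxK; congr block_mx; apply/matrixP => i j; rewrite !mxE.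
  - by rewrite M0j ?ord1 //= mulr1 mulr1n.
  - by rewrite M0j ?ord1 //= mulr0.
  - by rewrite Mi0 ?ord1 //= mulr0.
have [P' [Q' [d' [P'1 [Q'1 [d'0 M'e]]]]]] := IH (drsubmx M1).
exists (Hu *m block_mx (1%:M : 'M_1) 0 0 P'), (Hv *m block_mx (1%:M : 'M_1) 0 0 Q'), (row_mx (sig%:M : 'rV_1) d').
split; first by apply: orth_mul => //; apply: orth_blk.
split; first by apply: orth_mul => //; apply: orth_blk.
split.
  have h : forall i : 'I_(1 + n), 0 <= (row_mx (sig%:M : 'rV_1) d') 0 i.
    move=> i; case: (split_ordP i) => k ->; rewrite ?row_mxEl ?row_mxEr //.
    by rewrite ord1 mxE eqxx mulr1n.
  exact: h.
have HuT : Hu *m Hu^T = 1%:M by apply: mulmx1C.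
have HvT : Hv *m Hv^T = 1%:M by apply: mulmx1C.
have XE : X = Hu *m M1 *m Hv^T.
  by rewrite M1E /M !mulmxA HuT mul1mx -mulmxA HvT mulmx1.
have key : block_mx (1%:M : 'M_1) 0 0 P' *m diag_mx (row_mx (sig%:M : 'rV_1) d')
    *m (block_mx (1%:M : 'M_1) 0 0 Q')^T = M1.
  rewrite Mblk M'e diag_mx_row.
  rewrite tr_block_mx !trmx0 trmx1 !mulmx_block.
  rewrite !mulmx0 !mul0mx !mulmx1 !mul1mx !addr0 !add0r.
  rewrite ?mul0mx; congr block_mx.
  by apply/matrixP => i j; rewrite !ord1 !mxE.
rewrite XE -key trmx_mul !mulmxA.
reflexivity.
Qed.


Lemma sqn_diag n (e : 'rV[R]_n) (z : 'cV[R]_n) :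
  sqn (diag_mx e *m z) = \sum_i (e 0 i * z i 0) ^+ 2.
Proof. by rewrite sqnE mul_diag_mx; apply: eq_bigr => i _; rewrite mxE. Qed.

Lemma sqn_le_of n k (x : 'cV[R]_n) (y : 'cV[R]_k) c : 0 <= c ->
  vnorm2 x <= c * vnorm2 y -> sqn x <= c ^+ 2 * sqn y.
Proof.
move=> c0 h; rewrite -!vnorm2_sq -exprMn.
by rewrite ler_pXn2r ?nnegrE ?mulr_ge0 ?vnorm2_ge0.
Qed.

Lemma polar n (X : 'M[R]_n) s : 0 <= s -> bnd X 1 ->
  (forall y, (1 - s ^+ 2) * sqn y <= sqn (X *m y)) ->
  exists W : 'M[R]_n, W^T *m W = 1%:M /\ bnd (X - W) (s ^+ 2).
Proof.
move=> s0 hX hlow.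
have [P [Q [d [P1 [Q1 [d0 XE]]]]]] := svd X.
have QT1 : Q *m Q^T = 1%:M by apply: mulmx1C.
have QTo : Q^T^T *m Q^T = 1%:M by rewrite trmxK.
exists (P *m Q^T); split; first by apply: orth_mul.
have di : forall i, (d 0 i - 1) ^+ 2 <= (s ^+ 2) ^+ 2.
  move=> i; pose z : 'cV[R]_n := delta_mx i 0.
  have sz : sqn z = 1.
    rewrite sqnE (bigD1 i) //= big1 ?addr0; first by rewrite mxE !eqxx expr1n.
    by move=> j /negbTE ji; rewrite mxE ji expr0n.
  have Xz : sqn (X *m (Q *m z)) = d 0 i ^+ 2.
    rewrite XE -!mulmxA sqn_orth // (mulmxA Q^T) Q1 mul1mx sqn_diag.
    rewrite (bigD1 i) //= big1 ?addr0; first by rewrite mxE !eqxx mulr1.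
    by move=> j /negbTE ji; rewrite mxE ji mulr0 expr0n.
  have sQz : sqn (Q *m z) = 1 by rewrite sqn_orth.
  have h1 := hlow (Q *m z); rewrite Xz sQz mulr1 in h1.
  have h2 := sqn_le_of ler01 (hX (Q *m z)); rewrite Xz sQz expr1n mulr1 in h2.
  have := d0 i; nra.
apply: bnd_ge (s ^+ 2) _ _ (lexx _) => y.
apply: vnorm2_leZ; first exact: sqr_ge0.
rewrite XE -mulmxA -mulmxBr -mulmxA sqn_orth // -{2}[Q^T]mul1mx -mulmxBl -mulmxA.
have -> : diag_mx d - 1%:M = diag_mx (d - const_mx 1).
  by rewrite linearB /= diag_const_mx.
rewrite sqn_diag -(sqn_orth y QTo) sqnE mulr_sumr; apply: ler_sum => i _.
rewrite !mxE exprMn; apply: ler_wpM2r; first exact: sqr_ge0.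
exact: di.
Qed.

End SVD.


Section Main.
Variable R : realType.

Lemma trmxB r c (A B : 'M[R]_(r, c)) : (A - B)^T = A^T - B^T.
Proof. by apply/matrixP => i j; rewrite !mxE. Qed.

Lemma orth_facts a b (K : 'M[R]_(a + b, a)) (L : 'M[R]_(a + b, b)) :
  (row_mx K L)^T *m row_mx K L = 1%:M ->
  [/\ K^T *m K = 1%:M, K^T *m L = 0, L^T *m K = 0, L^T *m L = 1%:M &
      K *m K^T + L *m L^T = 1%:M].
Proof.
move=> h; have h' := mulmx1C h.
rewrite tr_row_mx mul_row_col in h'.
rewrite tr_row_mx mul_col_row scalar_mx_block in h.
by case/eq_block_mx: h => -> -> -> ->.
Qed.

Lemma orth_split r a b (K : 'M[R]_(r, a)) (L : 'M[R]_(r, b)) y :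
  K *m K^T + L *m L^T = 1%:M -> sqn (K^T *m y) + sqn (L^T *m y) = sqn y.
Proof.
move=> h; rewrite /sqn !dot_adj !trmxK -dotDl !mulmxA -mulmxDl h mul1mx.
by [].
Qed.

Lemma sqn_col a b (x : 'cV[R]_a) (y : 'cV[R]_b) : sqn (col_mx x y) = sqn x + sqn y.
Proof. by rewrite /sqn /dot tr_col_mx mul_row_col mxE. Qed.

Lemma bnd_blk a b (E : 'M[R]_(a, b)) e : 0 <= e -> bnd E e -> bnd E^T e ->
  bnd (block_mx 0 E E^T 0) e.
Proof.
move=> e0 h1 h2 x; apply: vnorm2_leZ => //.
rewrite -[x]vsubmxK mul_block_col !mul0mx !add0r !addr0 !sqn_col mulrDr addrC.
by apply: lerD; apply: sqn_le_of.
Qed.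

Lemma smin_sq n (C : 'M[R]_n) x : (0 < n)%N -> smin C ^+ 2 * sqn x <= sqn (C *m x).
Proof.
move=> n0; have h := smin_lb C x.
rewrite -!vnorm2_sq -exprMn ler_pXn2r // nnegrE ?vnorm2_ge0 //.
by apply: mulr_ge0; [apply: smin_ge0 | apply: vnorm2_ge0].
Qed.

Lemma bnd1_orth r c (M : 'M[R]_(r, c)) : M^T *m M = 1%:M -> bnd M^T 1.
Proof. by move=> h; apply: bnd_tr => //; apply: bnd_orth. Qed.

Lemma sin_bnd m r k (Ut Um : 'M[R]_(r, m)) (Pt : 'M[R]_(r, k)) : (0 < m)%N ->
  Ut *m Ut^T + Pt *m Pt^T = 1%:M -> Um^T *m Um = 1%:M -> Ut^T *m Ut = 1%:M ->
  0 <= sin_canon_norm Ut Um /\ bnd (Pt^T *m Um) (sin_canon_norm Ut Um).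
Proof.
move=> m0 hsplit hUm hUt.
set c := smin (Ut^T *m Um).
have c0 : 0 <= c by apply: smin_ge0.
have c1 : c <= 1.
  apply: smin_le => //; rewrite -[1]mulr1; apply: bnd_mul => //.
    exact: bnd1_orth.
  exact: bnd_orth.
have cc : 0 <= 1 - c ^+ 2 by rewrite subr_ge0 expr_le1.
have sE : sin_canon_norm Ut Um ^+ 2 = 1 - c ^+ 2 by rewrite /sin_canon_norm sqr_sqrtr.
have s0 : 0 <= sin_canon_norm Ut Um by apply: sqrtr_ge0.
split => // x; apply: vnorm2_leZ => //; rewrite sE.
have h1 := orth_split (Um *m x) hsplit.
rewrite (sqn_orth _ hUm) in h1.
have h2 := smin_sq (Ut^T *m Um) x m0; rewrite -/c -mulmxA in h2.
rewrite -mulmxA; nra.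
Qed.

Lemma cos_low r k m k' (Pt : 'M[R]_(r, k)) (Um : 'M[R]_(r, m)) (Pm : 'M[R]_(r, k')) s :
  Pt^T *m Pt = 1%:M -> Um *m Um^T + Pm *m Pm^T = 1%:M -> 0 <= s ->
  bnd (Pt^T *m Um) s -> forall y, (1 - s ^+ 2) * sqn y <= sqn (Pm^T *m Pt *m y).
Proof.
move=> hPt hsplit s0 hb y.
have h1 := orth_split (Pt *m y) hsplit; rewrite (sqn_orth _ hPt) in h1.
have h2 := sqn_le_of s0 (bnd_tr s0 hb y).
rewrite trmx_mul trmxK -mulmxA in h2.
rewrite -mulmxA; nra.
Qed.

Lemma addsub_mid r c (a b x d : 'M[R]_(r, c)) : a + b - x = a + (b - d) + (d - x).
Proof. by rewrite -!addrA addKr. Qed.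

End Main.

Theorem theorem4p3 (R : realType) (m p q : nat)
  (Hm : (1 <= m)%N) (Hq : (1 <= q)%N) (Hqp : (q <= p)%N)
  (A : 'M[R]_(m + p, m + q))
  (U : 'M[R]_(m + p)) (V : 'M[R]_(m + q)) (sigma : 'I_(m + q) -> R)
  (HU : orth_sq_mx U) (HV : orth_sq_mx V)
  (Hsig0 : forall j, 0 <= sigma j)
  (Hsigdec : forall i j : 'I_(m + q), (i <= j)%N -> sigma j <= sigma i)
  (HA : A = U *m rect_diag (m + p) sigma *m V^T)
  (tau : R) (Htau : 0 <= tau)
  (Ut : 'M[R]_(m + p, m)) (Vt : 'M[R]_(m + q, m))
  (Pt : 'M[R]_(m + p, p)) (Qt : 'M[R]_(m + q, q))
  (HUt : orthonormal_cols Ut) (HVt : orthonormal_cols Vt)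
  (HUPt : orth_sq_mx (row_mx Ut Pt)) (HVQt : orth_sq_mx (row_mx Vt Qt)) :
  let Um : 'M[R]_(m + p, m) := lsubmx U in
  let Pm : 'M[R]_(m + p, p) := rsubmx U in
  let Vm : 'M[R]_(m + q, m) := lsubmx V in
  let Qm : 'M[R]_(m + q, q) := rsubmx V in
  let Sig' : 'M[R]_(p, q) := Pm^T *m A *m Qm in
  let B' : 'M[R]_(p + q) :=
    block_mx (- tau%:M) Sig' Sig'^T (- tau%:M) in
  let Bt' : 'M[R]_(p + q) :=
    block_mx (- tau%:M) (Pt^T *m A *m Qt) (Qt^T *m A^T *m Pt) (- tau%:M) in
  exists Z : 'M[R]_(p + q), orth_sq_mx Z /\
    spnorm (Bt' - Z^T *m B' *m Z)
      <= spnorm A * (sin_canon_norm Ut Um + sin_canon_norm Vt Vm) ^+ 2.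
Proof.
move=> Um Pm Vm Qm Sig' B' Bt'.
have m0 : (0 < m)%N by [].
have UE : U = row_mx Um Pm by rewrite /Um /Pm hsubmxK.
have VE : V = row_mx Vm Qm by rewrite /Vm /Qm hsubmxK.
clearbody Um Pm Vm Qm.
have [hUm hUmPm hPmUm hPm hUsplit] : [/\ Um^T *m Um = 1%:M, Um^T *m Pm = 0,
    Pm^T *m Um = 0, Pm^T *m Pm = 1%:M & Um *m Um^T + Pm *m Pm^T = 1%:M].
  by apply: orth_facts; rewrite -UE.
have [hVm hVmQm hQmVm hQm hVsplit] : [/\ Vm^T *m Vm = 1%:M, Vm^T *m Qm = 0,
    Qm^T *m Vm = 0, Qm^T *m Qm = 1%:M & Vm *m Vm^T + Qm *m Qm^T = 1%:M].
  by apply: orth_facts; rewrite -VE.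
have [hUt _ _ hPt hUtsplit] := orth_facts HUPt.
have [hVt _ _ hQt hVtsplit] := orth_facts HVQt.
set D := rect_diag (m + p) sigma.
have Dblk : D = block_mx (ulsubmx D) 0 0 (drsubmx D).
  rewrite -{1}[D]submxK; congr block_mx; apply/matrixP => i j; rewrite !mxE /=.
    by case: eqP => // h; have := ltn_ord i; lia.
  by case: eqP => // h; have := ltn_ord j; lia.
set D1 := ulsubmx D in Dblk; set D2 := drsubmx D in Dblk.
have AE : A = Um *m D1 *m Vm^T + Pm *m D2 *m Qm^T.
  rewrite HA UE VE -/D Dblk tr_row_mx mul_row_block !mulmx0 ?mul0mx !addr0 !add0r.
  by rewrite mul_row_col.
have Sig'E : Sig' = D2.
  rewrite /Sig' AE mulmxDr mulmxDl !mulmxA hPmUm hPm !mul0mx add0r mul1mx.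
  by rewrite -mulmxA hQm mulmx1.
have D1E : D1 = Um^T *m A *m Vm.
  rewrite AE mulmxDr mulmxDl !mulmxA hUm hUmPm !mul0mx addr0 mul1mx.
  by rewrite -mulmxA hVm mulmx1.
have PtAQt : Pt^T *m A *m Qt = Pt^T *m Um *m D1 *m (Vm^T *m Qt)
    + (Pm^T *m Pt)^T *m D2 *m (Qm^T *m Qt).
  by rewrite AE mulmxDr mulmxDl !mulmxA trmx_mul trmxK ?mulmxA.
have [s1_0 hS21] := sin_bnd m0 hUtsplit hUm hUt.
have [s2_0 hT'] := sin_bnd m0 hVtsplit hVm hVt.
set s1 := sin_canon_norm Ut Um in s1_0 hS21 *.
set s2 := sin_canon_norm Vt Vm in s2_0 hT' *.
have hT : bnd (Vm^T *m Qt) s2.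
  by have := bnd_tr s2_0 hT'; rewrite trmx_mul trmxK.
have hX := cos_low hPt hUsplit s1_0 hS21.
have hY := cos_low hQt hVsplit s2_0 hT'.
have bX : bnd (Pm^T *m Pt) 1.
  by rewrite -[1]mulr1; apply: bnd_mul ler01 (bnd1_orth hPm) (bnd_orth hPt).
have bY : bnd (Qm^T *m Qt) 1.
  by rewrite -[1]mulr1; apply: bnd_mul ler01 (bnd1_orth hQm) (bnd_orth hQt).
have [W1 [hW1 hXW1]] := polar s1_0 bX hX.
have [W2 [hW2 hYW2]] := polar s2_0 bY hY.
set a := spnorm A.
have a0 : 0 <= a by apply: spnorm_ge0.
have hA : bnd A a by apply: spnorm_ub.
have hD1 : bnd D1 a.
  rewrite D1E -[a]mul1r -[X in bnd _ X]mulr1.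
  apply: bnd_mul; first by rewrite mul1r.
    by apply: bnd_mul ler01 (bnd1_orth hUm) hA.
  exact: bnd_orth.
have hD2 : bnd D2 a.
  rewrite -Sig'E /Sig' -[a]mul1r -[X in bnd _ X]mulr1.
  apply: bnd_mul; first by rewrite mul1r.
    by apply: bnd_mul ler01 (bnd1_orth hPm) hA.
  exact: bnd_orth.
pose Z : 'M[R]_(p + q) := block_mx W1 0 0 W2.
exists Z; split.
  rewrite /orth_sq_mx /Z tr_block_mx !trmx0 mulmx_block !mulmx0 !mul0mx !addr0 !add0r.
  by rewrite hW1 hW2 -scalar_mx_block.
pose E := Pt^T *m A *m Qt - W1^T *m D2 *m W2.
have diff : Bt' - Z^T *m B' *m Z = block_mx 0 E E^T 0.
  rewrite /B' /Bt' /Z Sig'E tr_block_mx !trmx0 !mulmx_block !mulmx0 !mul0mx !addr0 !add0r.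
  rewrite !mulmxN !mulNmx !mul_mx_scalar -!scalemxAl hW1 hW2 !scalemx1.
  rewrite opp_block_mx add_block_mx !subrr.
  congr block_mx.
  by rewrite /E trmxB !trmx_mul !trmxK !mulmxA.
have hE : bnd E (s1 * a * s2 + s1 ^+ 2 * a * 1 + 1 * a * s2 ^+ 2).
  have -> : E = Pt^T *m Um *m D1 *m (Vm^T *m Qt)
      + ((Pm^T *m Pt)^T - W1^T) *m D2 *m (Qm^T *m Qt) + W1^T *m D2 *m (Qm^T *m Qt - W2).
    rewrite /E PtAQt mulmxBl mulmxBl mulmxBr.
    exact: addsub_mid.
  apply: bnd_add; first apply: bnd_add.
  - exact: (bnd_mul (mulr_ge0 s1_0 a0) (bnd_mul s1_0 hS21 hD1) hT).
  - have hXt : bnd ((Pm^T *m Pt)^T - W1^T) (s1 ^+ 2).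
      by rewrite -trmxB; apply: bnd_tr => //; apply: sqr_ge0.
    exact: (bnd_mul (mulr_ge0 (sqr_ge0 s1) a0) (bnd_mul (sqr_ge0 s1) hXt hD2) bY).
  - exact: (bnd_mul (mulr_ge0 ler01 a0) (bnd_mul ler01 (bnd1_orth hW1) hD2) hYW2).
have e0 : 0 <= s1 * a * s2 + s1 ^+ 2 * a * 1 + 1 * a * s2 ^+ 2.
  by apply: addr_ge0; [apply: addr_ge0|]; apply: mulr_ge0; rewrite ?mulr_ge0 ?sqr_ge0.
rewrite diff; apply: spnorm_le; first by apply: mulr_ge0 => //; apply: sqr_ge0.
apply: bnd_ge (bnd_blk e0 hE (bnd_tr e0 hE)) _.
have := mulr_ge0 (mulr_ge0 a0 s1_0) s2_0; nra.
Qed.
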